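(* Let $\Theta\subseteq\mathbb{R}^p$ be open and $\rho_\theta=\sum_{k=1}^dp_k(\theta)|w_k(\theta)\rangle\langle w_k(\theta)|$ a family of density matrices on $\mathbb{C}^d$, with $p_k\ge0$ differentiable and $\{|w_k(\theta)\rangle\}$ an orthonormal basis of $\mathbb{C}^d$ depending differentiably on $\theta$. Then, for every $\theta\in\Theta$, $H_\theta\le C_L(\theta)\le C_\Upsilon(\theta)$ in positive semidefinite order. Equality $H_\theta=C_L(\theta)$ holds if and only if $\langle\frac{\partial w_j}{\partial\theta^m}|w_k\rangle=0$ for all $m$ and all $j\neq k$ with $p_j,p_k>0$. Equality $C_L(\theta)=C_\Upsilon(\theta)$ holds if and only if $\langle\frac{\partial w_i}{\partial\theta^m}|w_i\rangle=0$ for all $m$ and all $i$ with $p_i>0$.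
   Context: Write $|w_i^{(m)}\rangle=\partial|w_i\rangle/\partial\theta^m$. $H_\theta$ is the SLD quantum information matrix with entries $(H_\theta)_{kl}=\mathrm{Re}\,\mathrm{tr}\{\lambda^k\rho_\theta\lambda^l\}$, where $\lambda^k$ is a Hermitian solution of $\frac{\partial\rho_\theta}{\partial\theta^k}=\frac12(\rho_\theta\lambda^k+\lambda^k\rho_\theta)$. The $C_L$ quantum information is the $p\times p$ matrix $(C_L)_{kl}=\sum_{i:p_i>0}\frac{1}{p_i}\frac{\partial p_i}{\partial\theta^k}\frac{\partial p_i}{\partial\theta^l}+4\,\mathrm{Re}\sum_{i<j}(p_i+p_j)\langle w_i^{(k)}|w_j\rangle\langle w_j|w_i^{(l)}\rangle$. The Sarovar–Milburn quantum information of the family (relative to the chosen eigenvectors) is $(C_\Upsilon)_{kl}=(C_L)_{kl}+4\sum_{i:p_i>0}p_i\langle w_i^{(k)}|w_i\rangle\langle w_i|w_i^{(l)}\rangle$. *)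

(* Defs.v *)
From HB Require Import structures.
From mathcomp Require Import all_boot all_order all_algebra.
From mathcomp Require Import all_classical all_reals all_analysis.
From mathcomp.real_closed Require Import complex.
Set Implicit Arguments. Unset Strict Implicit. Unset Printing Implicit Defensive.
Import Order.TTheory GRing.Theory Num.Theory.
Import numFieldNormedType.Exports.
Local Open Scope ring_scope.

Section QInfo.
Variable R : realType.
Local Notation C := (complex R).

Definition rc (x : R) : C := Complex x 0.

Definition adjmx m n (A : 'M[C]_(m, n)) : 'M[C]_(n, m) :=
  \matrix_(i, j) conjc (A j i).

Definition braket n (u v : 'cV[C]_n) : C := (adjmx u *m v) 0 0.

Variable p : nat.

Definition evec (m : 'I_p) : 'rV[R]_p := delta_mx 0 m.

Definition pder (f : 'rV[R]_p -> R) (m : 'I_p) (th : 'rV[R]_p) : R :=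
  'D_(evec m) f th.

Definition cpder (f : 'rV[R]_p -> C) (m : 'I_p) (th : 'rV[R]_p) : C :=
  Complex (pder (fun x => complex.Re (f x)) m th) (pder (fun x => complex.Im (f x)) m th).

Definition dket d (w : 'rV[R]_p -> 'cV[C]_d) (m : 'I_p) (th : 'rV[R]_p)
  : 'cV[C]_d := \col_a cpder (fun x => w x a 0) m th.

Definition dmx d (A : 'rV[R]_p -> 'M[C]_d) (m : 'I_p) (th : 'rV[R]_p)
  : 'M[C]_d := \matrix_(a, b) cpder (fun x => A x a b) m th.

Variable d : nat.
Variable P : 'I_d -> 'rV[R]_p -> R.
Variable W : 'I_d -> 'rV[R]_p -> 'cV[C]_d.

Definition rho (th : 'rV[R]_p) : 'M[C]_d :=
  \sum_(k < d) rc (P k th) *: (W k th *m adjmx (W k th)).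

Definition is_SLD (lam : 'M[C]_d) (m : 'I_p) (th : 'rV[R]_p) : Prop :=
  adjmx lam = lam /\
  dmx rho m th = 2^-1 *: (rho th *m lam + lam *m rho th).

Definition Hmx (lam : 'I_p -> 'M[C]_d) (th : 'rV[R]_p) : 'M[C]_p :=
  \matrix_(k, l) rc (complex.Re (\tr (lam k *m rho th *m lam l))).

Definition CLmx (th : 'rV[R]_p) : 'M[C]_p :=
  \matrix_(k, l)
    (rc (\sum_(i < d | 0 < P i th)
            (P i th)^-1 * pder (P i) k th * pder (P i) l th)
     + rc (4 * complex.Re (\sum_(i < d) \sum_(j < d | (i < j)%N)
            rc (P i th + P j th)
            * braket (dket (W i) k th) (W j th)
            * braket (W j th) (dket (W i) l th)))).

Definition CUmx (th : 'rV[R]_p) : 'M[C]_p :=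
  CLmx th + \matrix_(k, l)
    (rc 4 * \sum_(i < d | 0 < P i th)
        rc (P i th) * braket (dket (W i) k th) (W i th)
                    * braket (W i th) (dket (W i) l th)).

End QInfo.

(* Loewner (positive semidefinite) order on complex square matrices:
   A <= B iff x^* (B - A) x is a nonnegative real for every x. *)
Definition psd_le (R : realType) n (A B : 'M[complex R]_n) : Prop :=
  forall x : 'cV[complex R]_n, 0 <= (adjmx x *m (B - A) *m x) 0 0.

(* Main.v *)
Require Import Defs.
From HB Require Import structures.
From mathcomp Require Import all_boot all_order all_algebra.
From mathcomp Require Import all_classical all_reals all_analysis.
From mathcomp.real_closed Require Import complex.
From mathcomp Require Import ring lra.
Import Order.TTheory GRing.Theory Num.Theory.
Import numFieldNormedType.Exports.
Local Open Scope ring_scope.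

Definition rdv {R : realType} {p} (f : 'rV[R]_p -> R) th v (df : R) :=
  derivable f th v /\ 'D_v f th = df.

Lemma rdvM {R : realType} {p} {f g : 'rV[R]_p -> R} {th v a b} :
  rdv f th v a -> rdv g th v b -> rdv (fun x => f x * g x) th v (a * g th + f th * b).
Proof.
move=> [fd fa] [gd gb]; split; first exact: (derivableM fd gd).
have -> : (fun x => f x * g x) = (f * g) by [].
rewrite deriveM // fa gb /GRing.scale /=. by rewrite addrC mulrC.
Qed.
Lemma rdv_ext {R : realType} {p} (f g : 'rV[R]_p -> R) th v a :
  (forall x, f x = g x) -> rdv f th v a -> rdv g th v a.
Proof. by move=> /funext <-. Qed.

Lemma rdvD {R : realType} {p} {f g : 'rV[R]_p -> R} {th v a b} :
  rdv f th v a -> rdv g th v b -> rdv (fun x => f x + g x) th v (a + b).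
Proof.
move=> [fd fa] [gd gb]; split; first exact: (derivableD fd gd).
have -> : (fun x => f x + g x) = (f + g) by [].
by rewrite deriveD // fa gb.
Qed.

Lemma rdvN {R : realType} {p} {f : 'rV[R]_p -> R} {th v a} :
  rdv f th v a -> rdv (fun x => - f x) th v (- a).
Proof.
move=> [fd fa]; split; first exact: (derivableN fd).
have -> : (fun x => - f x) = (- f) by [].
by rewrite deriveN // fa.
Qed.

Lemma rdvB {R : realType} {p} {f g : 'rV[R]_p -> R} {th v a b} :
  rdv f th v a -> rdv g th v b -> rdv (fun x => f x - g x) th v (a - b).
Proof. by move=> ? ?; apply: rdvD => //; apply: rdvN. Qed.

Lemma rdv_cst {R : realType} {p} (c : R) (th v : 'rV[R]_p) :
  rdv (fun _ => c) th v 0.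
Proof. split; [exact: derivable_cst | exact: derive_cst]. Qed.

Lemma rdv_sum {R : realType} {p} n (f : 'I_n -> 'rV[R]_p -> R) th v a :
  (forall i, rdv (f i) th v (a i)) ->
  rdv (fun x => \sum_(i < n) f i x) th v (\sum_(i < n) a i).
Proof.
elim: n f a => [|n IH] f a H.
  by apply: (@rdv_ext _ _ (fun _ => 0)) => [x|]; rewrite ?big_ord0 //; apply: rdv_cst.
rewrite big_ord_recr /=.
have -> : (fun x => \sum_(i < n.+1) f i x) = (fun x => \sum_(i < n) f (widen_ord (leqnSn n) i) x + f ord_max x).
  by apply: funext => x; rewrite big_ord_recr.
apply: rdvD; last exact: H.
exact: (IH (fun i => f (widen_ord (leqnSn n) i)) (fun i => a (widen_ord (leqnSn n) i))).
Qed.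


Definition cdv {R : realType} {p} (f : 'rV[R]_p -> R[i]) th v (z : R[i]) :=
  rdv (fun x => complex.Re (f x)) th v (complex.Re z) /\
  rdv (fun x => complex.Im (f x)) th v (complex.Im z).

Lemma cdv_ext {R : realType} {p} (f g : 'rV[R]_p -> R[i]) th v a :
  (forall x, f x = g x) -> cdv f th v a -> cdv g th v a.
Proof. by move=> /funext <-. Qed.

Lemma cdv_cpder {R : realType} {p} (f : 'rV[R]_p -> R[i]) m th z :
  cdv f th (evec R m) z -> cpder f m th = z.
Proof. by case: z => a b [[_ ea] [_ eb]]; rewrite /cpder /pder ea eb. Qed.

Lemma ReD {R : realType} (a b : R[i]) : complex.Re (a + b) = complex.Re a + complex.Re b.
Proof. by case: a; case: b. Qed.
Lemma ImD {R : realType} (a b : R[i]) : complex.Im (a + b) = complex.Im a + complex.Im b.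
Proof. by case: a; case: b. Qed.
Lemma ReM {R : realType} (a b : R[i]) :
  complex.Re (a * b) = complex.Re a * complex.Re b - complex.Im a * complex.Im b.
Proof. by case: a; case: b. Qed.
Lemma ImM {R : realType} (a b : R[i]) :
  complex.Im (a * b) = complex.Re a * complex.Im b + complex.Im a * complex.Re b.
Proof. by case: a => ? ?; case: b => ? ? /=; rewrite addrC. Qed.
Lemma ReJ {R : realType} (a : R[i]) : complex.Re (conjc a) = complex.Re a.
Proof. by case: a. Qed.
Lemma ImJ {R : realType} (a : R[i]) : complex.Im (conjc a) = - complex.Im a.
Proof. by case: a. Qed.

Lemma cdvD {R : realType} {p} {f g : 'rV[R]_p -> R[i]} {th v a b} :
  cdv f th v a -> cdv g th v b -> cdv (fun x => f x + g x) th v (a + b).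
Proof.
move=> [fr fi] [gr gi]; split.
  apply: (@rdv_ext _ _ (fun x => complex.Re (f x) + complex.Re (g x))).
    by move=> x; rewrite ReD.
  by rewrite ReD; exact: rdvD.
apply: (@rdv_ext _ _ (fun x => complex.Im (f x) + complex.Im (g x))).
  by move=> x; rewrite ImD.
by rewrite ImD; exact: rdvD.
Qed.

Lemma cdvM {R : realType} {p} {f g : 'rV[R]_p -> R[i]} {th v a b} :
  cdv f th v a -> cdv g th v b -> cdv (fun x => f x * g x) th v (a * g th + f th * b).
Proof.
move=> [fr fi] [gr gi]; split.
  apply: (@rdv_ext _ _ (fun x => complex.Re (f x) * complex.Re (g x) - complex.Im (f x) * complex.Im (g x))).
    by move=> x; rewrite ReM.
  rewrite ReD !ReM.
  have := rdvB (rdvM fr gr) (rdvM fi gi).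
  congr rdv; ring.
apply: (@rdv_ext _ _ (fun x => complex.Re (f x) * complex.Im (g x) + complex.Im (f x) * complex.Re (g x))).
  by move=> x; rewrite ImM.
rewrite ImD !ImM.
have := rdvD (rdvM fr gi) (rdvM fi gr).
congr rdv; ring.
Qed.

Lemma cdvJ {R : realType} {p} {f : 'rV[R]_p -> R[i]} {th v a} :
  cdv f th v a -> cdv (fun x => conjc (f x)) th v (conjc a).
Proof.
move=> [fr fi]; split.
  apply: (@rdv_ext _ _ (fun x => complex.Re (f x))); first by move=> x; rewrite ReJ.
  by rewrite ReJ.
apply: (@rdv_ext _ _ (fun x => - complex.Im (f x))); first by move=> x; rewrite ImJ.
by rewrite ImJ; exact: rdvN.
Qed.

Lemma cdv_rc {R : realType} {p} {f : 'rV[R]_p -> R} {th v a} :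
  rdv f th v a -> cdv (fun x => rc (f x)) th v (rc a).
Proof. by move=> fa; split => //=; exact: rdv_cst. Qed.

Lemma cdv_cst {R : realType} {p} (c : R[i]) (th v : 'rV[R]_p) :
  cdv (fun _ => c) th v 0.
Proof. by split; exact: rdv_cst. Qed.

Lemma cdv_sum {R : realType} {p} n (f : 'I_n -> 'rV[R]_p -> R[i]) th v a :
  (forall i, cdv (f i) th v (a i)) ->
  cdv (fun x => \sum_(i < n) f i x) th v (\sum_(i < n) a i).
Proof.
elim: n f a => [|n IH] f a H.
  apply: (@cdv_ext _ _ (fun _ => 0)) => [x|]; rewrite ?big_ord0 //; exact: cdv_cst.
rewrite big_ord_recr /=.
have -> : (fun x => \sum_(i < n.+1) f i x) = (fun x => \sum_(i < n) f (widen_ord (leqnSn n) i) x + f ord_max x).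
  by apply: funext => x; rewrite big_ord_recr.
apply: cdvD; last exact: H.
exact: (IH (fun i => f (widen_ord (leqnSn n) i)) (fun i => a (widen_ord (leqnSn n) i))).
Qed.


Lemma rcE {R : realType} (x : R) : rc x = (x%:C)%C. Proof. by []. Qed.
Lemma rc_ReE {R : realType} (z : R[i]) : rc (complex.Re z) = (z + (conjc z)) / 2.
Proof. by rewrite rcE ReJ_add. Qed.
Lemma conj_rc {R : realType} (x : R) : (conjc (rc x)) = rc x.
Proof. by rewrite /rc /= oppr0. Qed.
Lemma conjK {R : realType} (z : R[i]) : conjc (conjc z) = z.
Proof. by case: z => a b; rewrite /= opprK. Qed.

Lemma conjD {R : realType} (a b : R[i]) : (conjc (a + b)) = (conjc a) + (conjc b).
Proof. by case: a => ? ?; case: b => ? ? /=; rewrite opprD. Qed.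
Lemma conjM {R : realType} (a b : R[i]) : (conjc (a * b)) = (conjc a) * (conjc b).
Proof. by case: a => ? ?; case: b => ? ? /=; apply/eqP; rewrite eq_complex /= !mulrN !mulNr opprK opprD !eqxx. Qed.
Lemma conjN {R : realType} (a : R[i]) : (conjc (- a)) = - (conjc a).
Proof. by case: a. Qed.
Lemma conj0 {R : realType} : (conjc (0 : R[i])) = 0.
Proof. by rewrite /= oppr0. Qed.
Lemma conjS {R : realType} (I : finType) (P : pred I) (f : I -> R[i]) :
  (conjc (\sum_(i | P i) f i)) = \sum_(i | P i) (conjc (f i)).
Proof. by apply: (big_morph _ conjD conj0). Qed.
Lemma braketE {R : realType} n (u v : 'cV[R[i]]_n) :
  braket u v = \sum_a (conjc (u a 0)) * v a 0.
Proof. by rewrite /braket mxE; apply: eq_bigr => a _; rewrite mxE. Qed.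

Lemma braketC {R : realType} n (u v : 'cV[R[i]]_n) :
  braket u v = (conjc (braket v u)).
Proof.
rewrite !braketE conjS; apply: eq_bigr => a _.
by rewrite conjM conjK mulrC.
Qed.

Lemma adjmxK {R : realType} m n (A : 'M[R[i]]_(m, n)) : adjmx (adjmx A) = A.
Proof. by apply/matrixP => i j; rewrite !mxE conjK. Qed.

Lemma adjmxM {R : realType} m n k (A : 'M[R[i]]_(m, n)) (B : 'M[R[i]]_(n, k)) :
  adjmx (A *m B) = adjmx B *m adjmx A.
Proof.
apply/matrixP => i j; rewrite !mxE conjS; apply: eq_bigr => a _.
by rewrite !mxE conjM mulrC.
Qed.

Lemma sum_pairs {R : realType} n (f : 'I_n -> 'I_n -> R[i]) :
  \sum_(i < n) \sum_(j < n) f i j =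
  \sum_(i < n) f i i + \sum_(i < n) \sum_(j < n | (i < j)%N) (f i j + f j i).
Proof.
have E : forall i, \sum_(j < n) f i j =
   f i i + (\sum_(j < n | (i < j)%N) f i j + \sum_(j < n | (j < i)%N) f i j).
  move=> i; rewrite (bigD1 i) //=; congr (_ + _).
  rewrite (bigID (fun j : 'I_n => (i < j)%N)) /=; congr (_ + _).
    apply: eq_bigl => j; apply/andb_idl => h; apply/eqP => e; move: h; by rewrite e ltnn.
  by apply: eq_bigl => j; rewrite -leqNgt [RHS]ltn_neqAle.
rewrite (eq_bigr _ (fun i _ => E i)) big_split /= big_split /=; congr (_ + _).
have -> : \sum_(i < n) \sum_(j < n | (j < i)%N) f i j =
          \sum_(i < n) \sum_(j < n | (i < j)%N) f j i.
  under eq_bigr do rewrite big_mkcond.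
  rewrite exchange_big /=; apply: eq_bigr => i _.
  by rewrite [in RHS]big_mkcond.
by rewrite -big_split /=; apply: eq_bigr => i _; rewrite big_split.
Qed.

Lemma ReS {R : realType} (I : finType) (P : pred I) (f : I -> R[i]) :
  complex.Re (\sum_(i | P i) f i) = \sum_(i | P i) complex.Re (f i).
Proof. by apply: (big_morph _ ReD). Qed.

Lemma rcS {R : realType} (I : finType) (P : pred I) (f : I -> R) :
  rc (\sum_(i | P i) f i) = \sum_(i | P i) rc (f i).
Proof. by rewrite rcE rmorph_sum. Qed.

Lemma rcD {R : realType} (x y : R) : rc (x + y) = rc x + rc y.
Proof. by rewrite /rc; apply/eqP; rewrite eq_complex /= addr0 !eqxx. Qed.
Lemma rcM {R : realType} (x y : R) : rc (x * y) = rc x * rc y.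
Proof. by rewrite /rc; apply/eqP; rewrite eq_complex /= !mulr0 mul0r subr0 addr0 !eqxx. Qed.
Lemma rcN {R : realType} (x : R) : rc (- x) = - rc x.
Proof. by rewrite /rc; apply/eqP; rewrite eq_complex /= oppr0 !eqxx. Qed.
Lemma rcB {R : realType} (x y : R) : rc (x - y) = rc x - rc y.
Proof. by rewrite rcD rcN. Qed.
Lemma rc0 {R : realType} : rc (0 : R) = 0. Proof. by []. Qed.
Lemma rc1 {R : realType} : rc (1 : R) = 1. Proof. by []. Qed.
Lemma rcn {R : realType} n : rc (n%:R : R) = n%:R.
Proof. by elim: n => // n IH; rewrite -addn1 !natrD rcD IH. Qed.
Lemma rcV {R : realType} (x : R) : rc (x^-1) = (rc x)^-1.
Proof.
have [->|x0] := eqVneq x 0; first by rewrite invr0 rc0 invr0.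
apply: (@mulfI _ (rc x)); first by apply/eqP => -[]; apply/eqP.
by rewrite -rcM mulfV // divff //; apply/eqP => -[]; apply/eqP.
Qed.
Lemma Re_rc {R : realType} (x : R) : complex.Re (rc x) = x. Proof. by []. Qed.
Lemma rc_inj {R : realType} (x y : R) : rc x = rc y -> x = y. Proof. by case. Qed.

Lemma conj1 {R : realType} : conjc (1 : R[i]) = 1.
Proof. by rewrite /= oppr0. Qed.
Lemma conjV {R : realType} (x : R[i]) : conjc (x^-1) = (conjc x)^-1.
Proof.
have [->|x0] := eqVneq x 0; first by rewrite invr0 conj0 invr0.
have cx0 : conjc x != 0.
  by apply/eqP => h; move: x0; rewrite -(conjK x) h conj0 eqxx.
apply: (@mulfI _ (conjc x)) => //.
by rewrite -conjM !divff // conj1.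
Qed.

Lemma pair_term {R : realType} (pi pj : R) (Lk Ll Lk' Ll' bk bl : R[i]) :
  0 <= pi -> 0 <= pj ->
  Lk' = conjc Lk -> Ll' = conjc Ll ->
  (rc pi + rc pj) * Lk = 2 * ((rc pj - rc pi) * bk) ->
  (rc pi + rc pj) * Ll = 2 * ((rc pj - rc pi) * bl) ->
  rc (4 * complex.Re (rc (pi + pj) * (- bk) * (- conjc bl)))
   - rc (complex.Re (Lk * rc pj * Ll' + Lk' * rc pi * Ll))
  = rc (16 * pi * pj / (pi + pj)) * ((bk * conjc bl + conjc bk * bl) / 2).
Proof.
move=> pi0 pj0 -> -> Hk Hl.
have [s0|spos] := eqVneq (pi + pj) 0.
  have /andP[/eqP pi00 _] : (pi == 0) && (pj == 0) by rewrite -(paddr_eq0 pi0 pj0) s0.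
  have pj00 : pj = 0 by move: s0; rewrite pi00 add0r.
  by rewrite s0 pi00 pj00 !(rc0, mulr0, mul0r, addr0, subr0).
have rs : rc pi + rc pj != 0 by rewrite -rcD; apply/eqP => /rc_inj; apply/eqP.
have Ek : Lk = 2 * ((rc pj - rc pi) * bk) / (rc pi + rc pj).
  by rewrite -Hk mulrC mulKf.
have El : Ll = 2 * ((rc pj - rc pi) * bl) / (rc pi + rc pj).
  by rewrite -Hl mulrC mulKf.
rewrite Ek El !(rcM, rcD, rcB, rcV, rcn, rc1, rc_ReE).
rewrite !(conjD, conjM, conjN, conjK, conjV, conj_rc, conj1).
by field.
Qed.

Lemma diag_term {R : realType} (pi dk dl : R) (Lk Ll : R[i]) :
  0 <= pi ->
  (rc pi + rc pi) * Lk = 2 * rc dk ->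
  (rc pi + rc pi) * Ll = 2 * rc dl ->
  rc (complex.Re (Lk * rc pi * Ll)) = if 0 < pi then rc (pi^-1 * dk * dl) else 0.
Proof.
move=> pi0 Hk Hl.
have [ppos|] := ltP 0 pi; last first.
  move=> h; have -> : pi = 0 by apply/le_anti; rewrite h pi0.
  by rewrite rc0 mulr0 mul0r.
have rs : rc pi + rc pi != 0 by rewrite -rcD; apply/eqP => /rc_inj; apply/eqP; rewrite gt_eqF // addr_gt0.
have Ek : Lk = 2 * rc dk / (rc pi + rc pi) by rewrite -Hk mulrC mulKf.
have El : Ll = 2 * rc dl / (rc pi + rc pi) by rewrite -Hl mulrC mulKf.
have rp : rc pi != 0 by apply/eqP => /rc_inj; apply/eqP; rewrite gt_eqF.
rewrite Ek El !(rcM, rcV, rc_ReE, conjM, conjV, conjD, conj_rc, conj1).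
by field; rewrite rp rs.
Qed.

Lemma core {R : realType} d (p dpk dpl : 'I_d -> R) (Lk Ll bk bl : 'I_d -> 'I_d -> R[i]) :
  (forall i, 0 <= p i) ->
  (forall i j, Lk j i = conjc (Lk i j)) -> (forall i j, Ll j i = conjc (Ll i j)) ->
  (forall i j, (rc (p i) + rc (p j)) * Lk i j =
     2 * ((i == j)%:R * rc (dpk i) + (rc (p j) - rc (p i)) * bk i j)) ->
  (forall i j, (rc (p i) + rc (p j)) * Ll i j =
     2 * ((i == j)%:R * rc (dpl i) + (rc (p j) - rc (p i)) * bl i j)) ->
  rc (\sum_(i < d | 0 < p i) (p i)^-1 * dpk i * dpl i)
  + rc (4 * complex.Re (\sum_(i < d) \sum_(j < d | (i < j)%N)
          rc (p i + p j) * (- bk i j) * (- conjc (bl i j))))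
  - rc (complex.Re (\sum_(i < d) \sum_(j < d) Lk i j * rc (p j) * Ll j i))
  = \sum_(i < d) \sum_(j < d | (i < j)%N)
      rc (16 * p i * p j / (p i + p j)) * ((bk i j * conjc (bl i j) + conjc (bk i j) * bl i j) / 2).
Proof.
move=> p0 hk hl Dk Dl.
rewrite sum_pairs ReD rcD !ReS rcS.
have -> : \sum_(i < d) rc (complex.Re (Lk i i * rc (p i) * Ll i i)) =
          rc (\sum_(i < d | 0 < p i) (p i)^-1 * dpk i * dpl i).
  rewrite rcS [RHS]big_mkcond /=; apply: eq_bigr => i _.
  apply: diag_term => //.
    by rewrite Dk eqxx subrr mul0r addr0 mul1r.
  by rewrite Dl eqxx subrr mul0r addr0 mul1r.
rewrite opprD addrACA subrr add0r.
rewrite mulr_sumr !rcS -sumrB; apply: eq_bigr => i _.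
rewrite !ReS mulr_sumr !rcS -sumrB; apply: eq_bigr => j ij.
have nij : (i == j) = false by apply/negbTE; apply/eqP => e; move: ij; rewrite e ltnn.
apply: pair_term => //.
- by rewrite Dk nij mul0r add0r.
- by rewrite Dl nij mul0r add0r.
Qed.


Definition R1 {R : realType} {n} (z : 'I_n -> R[i]) : 'M[R[i]]_n :=
  \matrix_(k, l) (conjc (z k) * z l).

Definition qf {R : realType} {n} (x : 'cV[R[i]]_n) (A : 'M[R[i]]_n) : R[i] :=
  (adjmx x *m A *m x) 0 0.

Lemma qfD {R : realType} {n} (x : 'cV[R[i]]_n) A B : qf x (A + B) = qf x A + qf x B.
Proof. by rewrite /qf mulmxDr mulmxDl mxE. Qed.

Lemma qfN {R : realType} {n} (x : 'cV[R[i]]_n) A : qf x (- A) = - qf x A.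
Proof. by rewrite /qf mulmxN mulNmx mxE. Qed.

Lemma qfZ {R : realType} {n} (x : 'cV[R[i]]_n) a A : qf x (a *: A) = a * qf x A.
Proof. by rewrite /qf -scalemxAr -scalemxAl mxE. Qed.

Lemma qfS {R : realType} {n} (x : 'cV[R[i]]_n) (I : finType) (P : pred I) (A : I -> 'M[R[i]]_n) :
  qf x (\sum_(i | P i) A i) = \sum_(i | P i) qf x (A i).
Proof. by rewrite /qf mulmx_sumr mulmx_suml summxE. Qed.

Lemma qfE {R : realType} {n} (x : 'cV[R[i]]_n) A :
  qf x A = \sum_l (\sum_k conjc (x k 0) * A k l) * x l 0.
Proof.
rewrite /qf mxE; apply: eq_bigr => l _; rewrite mxE; congr (_ * _).
by apply: eq_bigr => k _; rewrite mxE.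
Qed.

Lemma qfR1 {R : realType} {n} (x : 'cV[R[i]]_n) z :
  qf x (R1 z) = conjc (\sum_k z k * x k 0) * (\sum_k z k * x k 0).
Proof.
rewrite qfE mulr_sumr; apply: eq_bigr => l _.
rewrite conjS mulr_suml mulr_suml; apply: eq_bigr => k _.
by rewrite mxE conjM; ring.
Qed.

Lemma rc_ge0 {R : realType} (x : R) : 0 <= x -> 0 <= rc x.
Proof. by move=> h; rewrite lecE /= eqxx. Qed.

Lemma cJ_ge0 {R : realType} (u : R[i]) : 0 <= conjc u * u.
Proof. by rewrite mulrC; exact: mulcJ_ge0. Qed.

Lemma qfR1_ge0 {R : realType} {n} (x : 'cV[R[i]]_n) z : 0 <= qf x (R1 z).
Proof. by rewrite qfR1; exact: cJ_ge0. Qed.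


Definition Umx {R : realType} {d} (w : 'I_d -> 'cV[R[i]]_d) : 'M[R[i]]_d :=
  \matrix_(a, i) w i a 0.

Definition tp {R : realType} {d} (w : 'I_d -> 'cV[R[i]]_d) (A : 'M[R[i]]_d) :=
  adjmx (Umx w) *m A *m Umx w.

Lemma adjU_mul {R : realType} {d} (w : 'I_d -> 'cV[R[i]]_d) (x : 'cV[R[i]]_d) i :
  (adjmx (Umx w) *m x) i 0 = braket (w i) x.
Proof. by rewrite braketE mxE; apply: eq_bigr => a _; rewrite !mxE. Qed.

Lemma mul_U {R : realType} {d} (w : 'I_d -> 'cV[R[i]]_d) (y : 'cV[R[i]]_d) j :
  (adjmx y *m Umx w) 0 j = braket y (w j).
Proof. by rewrite braketE mxE; apply: eq_bigr => a _; rewrite !mxE. Qed.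

Lemma tp_outer {R : realType} {d} (w : 'I_d -> 'cV[R[i]]_d) (x y : 'cV[R[i]]_d) i j :
  tp w (x *m adjmx y) i j = braket (w i) x * braket y (w j).
Proof.
rewrite /tp -mulmxA -mulmxA mulmxA mxE big_ord1.
by rewrite adjU_mul mul_U.
Qed.

Lemma UU1 {R : realType} {d} (w : 'I_d -> 'cV[R[i]]_d) :
  (forall i j, braket (w i) (w j) = (i == j)%:R) ->
  adjmx (Umx w) *m Umx w = 1%:M /\ Umx w *m adjmx (Umx w) = 1%:M.
Proof.
move=> ON.
have h : adjmx (Umx w) *m Umx w = 1%:M.
  apply/matrixP => i j; rewrite mxE [RHS]mxE -ON braketE.
  by apply: eq_bigr => a _; rewrite !mxE.
by split => //; apply: mulmx1C.
Qed.

Lemma tpM {R : realType} {d} (w : 'I_d -> 'cV[R[i]]_d) A B :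
  (forall i j, braket (w i) (w j) = (i == j)%:R) ->
  tp w (A *m B) = tp w A *m tp w B.
Proof.
move=> /UU1 [_ h]; rewrite /tp !mulmxA.
by rewrite -[adjmx _ *m A *m Umx w *m adjmx _]mulmxA h mulmx1.
Qed.

Lemma tpD {R : realType} {d} (w : 'I_d -> 'cV[R[i]]_d) A B :
  tp w (A + B) = tp w A + tp w B.
Proof. by rewrite /tp mulmxDr mulmxDl. Qed.

Lemma tpZ {R : realType} {d} (w : 'I_d -> 'cV[R[i]]_d) a A :
  tp w (a *: A) = a *: tp w A.
Proof. by rewrite /tp -scalemxAr -scalemxAl. Qed.

Lemma tpDE {R : realType} {d} (w : 'I_d -> 'cV[R[i]]_d) A B i j :
  tp w (A + B) i j = tp w A i j + tp w B i j.
Proof. by rewrite tpD mxE. Qed.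

Lemma tpZE {R : realType} {d} (w : 'I_d -> 'cV[R[i]]_d) a A i j :
  tp w (a *: A) i j = a * tp w A i j.
Proof. by rewrite tpZ mxE. Qed.

Lemma tpS {R : realType} {d} (w : 'I_d -> 'cV[R[i]]_d) n (A : 'I_n -> 'M[R[i]]_d) :
  tp w (\sum_(k < n) A k) = \sum_(k < n) tp w (A k).
Proof. by rewrite /tp mulmx_sumr mulmx_suml. Qed.

Lemma tp_tr {R : realType} {d} (w : 'I_d -> 'cV[R[i]]_d) A :
  (forall i j, braket (w i) (w j) = (i == j)%:R) ->
  \tr (tp w A) = \tr A.
Proof.
move=> /UU1 [_ h]; rewrite /tp mxtrace_mulC mulmxA h mul1mx //.
Qed.

Lemma tp_adj {R : realType} {d} (w : 'I_d -> 'cV[R[i]]_d) A :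
  adjmx A = A -> forall i j, tp w A j i = conjc (tp w A i j).
Proof.
move=> hA i j.
have : adjmx (tp w A) = tp w A by rewrite /tp !adjmxM adjmxK hA mulmxA.
by move=> /matrixP /(_ j i) <-; rewrite mxE.
Qed.

Lemma sum_delta {R : realType} {d} (i : 'I_d) (F : 'I_d -> R[i]) :
  \sum_(k < d) (i == k)%:R * F k = F i.
Proof.
rewrite (bigD1 i) //= eqxx mul1r big1 ?addr0 // => k /negbTE.
by rewrite eq_sym => ->; rewrite mul0r.
Qed.

Lemma sum_delta' {R : realType} {d} (i : 'I_d) (F : 'I_d -> R[i]) :
  \sum_(k < d) F k * (k == i)%:R = F i.
Proof.
rewrite (bigD1 i) //= eqxx mulr1 big1 ?addr0 // => k /negbTE ->.
by rewrite mulr0.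
Qed.

Definition rhoA {R : realType} {d} (p : 'I_d -> R) (w : 'I_d -> 'cV[R[i]]_d) : 'M[R[i]]_d :=
  \sum_(k < d) rc (p k) *: (w k *m adjmx (w k)).

Lemma tp_rho {R : realType} {d} (p : 'I_d -> R) (w : 'I_d -> 'cV[R[i]]_d) i j :
  (forall i j, braket (w i) (w j) = (i == j)%:R) ->
  tp w (rhoA p w) i j = rc (p i) * (i == j)%:R.
Proof.
move=> ON; rewrite /rhoA tpS summxE.
rewrite -(sum_delta i (fun k => rc (p k) * (k == j)%:R)).
by apply: eq_bigr => k _; rewrite tpZE tp_outer !ON; ring.
Qed.

Lemma tp_rhoL {R : realType} {d} (p : 'I_d -> R) (w : 'I_d -> 'cV[R[i]]_d) (L : 'M[R[i]]_d) i j :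
  (forall i j, braket (w i) (w j) = (i == j)%:R) ->
  (tp w (rhoA p w) *m L) i j = rc (p i) * L i j.
Proof.
move=> ON; rewrite mxE -(sum_delta i (fun k => rc (p k) * L k j)).
by apply: eq_bigr => k _; rewrite tp_rho //; case: (eqVneq i k) => [<-|_]; rewrite ?eqxx /=; ring.
Qed.

Lemma tp_Lrho {R : realType} {d} (p : 'I_d -> R) (w : 'I_d -> 'cV[R[i]]_d) (L : 'M[R[i]]_d) i j :
  (forall i j, braket (w i) (w j) = (i == j)%:R) ->
  (L *m tp w (rhoA p w)) i j = L i j * rc (p j).
Proof.
move=> ON; rewrite mxE -(sum_delta' j (fun k => L i k * rc (p k))).
by apply: eq_bigr => k _; rewrite tp_rho //; case: (eqVneq k j) => [->|_]; rewrite ?eqxx /=; ring.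
Qed.

Lemma tp_drho {R : realType} {d} (p dp : 'I_d -> R) (w dw : 'I_d -> 'cV[R[i]]_d) i j :
  (forall i j, braket (w i) (w j) = (i == j)%:R) ->
  (forall i j, braket (dw i) (w j) = - braket (w i) (dw j)) ->
  tp w (\sum_(k < d) (rc (dp k) *: (w k *m adjmx (w k))
          + rc (p k) *: (dw k *m adjmx (w k) + w k *m adjmx (dw k)))) i j
  = (i == j)%:R * rc (dp i) + (rc (p j) - rc (p i)) * braket (w i) (dw j).
Proof.
move=> ON F2; rewrite tpS summxE.
under eq_bigr do rewrite tpDE !tpZE tpDE !tp_outer !ON.
rewrite big_split /=.
have e1 : \sum_(k < d) rc (dp k) * ((i == k)%:R * (k == j)%:R) = (i == j)%:R * rc (dp i).
  rewrite (eq_bigr (fun k => (i == k)%:R * (rc (dp k) * (k == j)%:R))); last by move=> k _; ring.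
  by rewrite sum_delta mulrC.
rewrite e1; congr (_ + _).
under eq_bigr do rewrite mulrDr.
rewrite big_split /=.
have e2 : \sum_(k < d) rc (p k) * (braket (w i) (dw k) * (k == j)%:R) = rc (p j) * braket (w i) (dw j).
  rewrite (eq_bigr (fun k => (rc (p k) * braket (w i) (dw k)) * (k == j)%:R)); last by move=> k _; ring.
  by rewrite sum_delta'.
have e3 : \sum_(k < d) rc (p k) * ((i == k)%:R * braket (dw k) (w j)) = rc (p i) * braket (dw i) (w j).
  rewrite (eq_bigr (fun k => (i == k)%:R * (rc (p k) * braket (dw k) (w j)))); last by move=> k _; ring.
  by rewrite sum_delta.
rewrite e2 e3 F2; ring.
Qed.

Lemma tr_form {R : realType} {d} (p : 'I_d -> R) (w : 'I_d -> 'cV[R[i]]_d) (A B : 'M[R[i]]_d) :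
  (forall i j, braket (w i) (w j) = (i == j)%:R) ->
  \tr (A *m rhoA p w *m B) = \sum_(i < d) \sum_(j < d) tp w A i j * rc (p j) * tp w B j i.
Proof.
move=> ON; rewrite -(tp_tr _ _ ON) !tpM //.
rewrite /mxtrace; apply: eq_bigr => i _; rewrite mxE; apply: eq_bigr => j _.
by rewrite tp_Lrho.
Qed.

Lemma two_neq0 {R : realType} : (2 : R[i]) != 0.
Proof. by rewrite pnatr_eq0. Qed.

Lemma sld_rel {R : realType} {d} (p : 'I_d -> R) (w : 'I_d -> 'cV[R[i]]_d) (lam Dm : 'M[R[i]]_d) :
  (forall i j, braket (w i) (w j) = (i == j)%:R) ->
  Dm = 2^-1 *: (rhoA p w *m lam + lam *m rhoA p w) ->
  forall i j, (rc (p i) + rc (p j)) * tp w lam i j = 2 * tp w Dm i j.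
Proof.
move=> ON -> i j; rewrite tpZE tpDE !tpM // tp_rhoL // tp_Lrho //.
by field.
Qed.


Lemma cdv_uniq {R : realType} {p} (f : 'rV[R]_p -> R[i]) th v z1 z2 :
  cdv f th v z1 -> cdv f th v z2 -> z1 = z2.
Proof.
case: z1 => a1 b1; case: z2 => a2 b2 [[_ e1] [_ f1]] [[_ e2] [_ f2]].
by move: e1 f1 e2 f2 => /= -> -> -> ->.
Qed.

Lemma cdv_near_cst {R : realType} {p} (f : 'rV[R]_p -> R[i]) th v c :
  (\forall x \near th, f x = c) -> cdv f th v 0.
Proof.
move=> nf; split; split.
- apply: (near_eq_derivable _ (derivable_cst (complex.Re c) th v)).
  by apply: filterS nf => x /= ->.
- rewrite (near_eq_derive (g := cst (complex.Re c))) ?derive_cst //.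
  by apply: filterS nf => x /= ->.
- apply: (near_eq_derivable _ (derivable_cst (complex.Im c) th v)).
  by apply: filterS nf => x /= ->.
- rewrite (near_eq_derive (g := cst (complex.Im c))) ?derive_cst //.
  by apply: filterS nf => x /= ->.
Qed.

Lemma cdv_W {R : realType} {p d} (W : 'I_d -> 'rV[R]_p -> 'cV[R[i]]_d) k a m th :
  differentiable (fun x => complex.Re (W k x a 0)) th /\
  differentiable (fun x => complex.Im (W k x a 0)) th ->
  cdv (fun x => W k x a 0) th (evec R m) (dket (W k) m th a 0).
Proof.
move=> [hr hi]; rewrite /dket mxE /cpder /=; split; split => //.
- exact: diff_derivable.
- exact: diff_derivable.
Qed.

Lemma rdv_P {R : realType} {p} (f : 'rV[R]_p -> R) m th :
  differentiable f th -> rdv f th (evec R m) (pder f m th).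
Proof. by move=> h; split => //; exact: diff_derivable. Qed.

Lemma F2_lemma {R : realType} {p d} (Theta : set 'rV[R]_p)
  (W : 'I_d -> 'rV[R]_p -> 'cV[R[i]]_d) m th :
  open Theta -> Theta th ->
  (forall th, Theta th -> forall i j : 'I_d,
      braket (W i th) (W j th) = (i == j)%:R) ->
  (forall k (a : 'I_d),
      differentiable (fun x => complex.Re (W k x a 0)) th /\
      differentiable (fun x => complex.Im (W k x a 0)) th) ->
  forall i j, braket (dket (W i) m th) (W j th) = - braket (W i th) (dket (W j) m th).
Proof.
move=> oT Tth ON dW i j.
have nT : \forall x \near th, Theta x by exact: oT.
have c0 : cdv (fun x => braket (W i x) (W j x)) th (evec R m) 0.
  apply: (@cdv_near_cst _ _ _ _ _ ((i == j)%:R)).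
  by apply: filterS nT => x Tx; rewrite ON.
have c1 := @cdv_sum _ _ d _ _ _ _ (fun a => cdvM (cdvJ (cdv_W W i a m th (dW i a))) (cdv_W W j a m th (dW j a))).
have c1' : cdv (fun x => braket (W i x) (W j x)) th (evec R m)
   (\sum_(a < d) (conjc (dket (W i) m th a 0) * W j th a 0 + conjc (W i th a 0) * dket (W j) m th a 0)).
  by apply: (cdv_ext _ _ _ _ _ _ c1) => x; rewrite braketE.
have := cdv_uniq _ _ _ _ _ c0 c1'; rewrite big_split /= -!braketE => /eqP.
by rewrite eq_sym addr_eq0 => /eqP.
Qed.

Lemma outerE {R : realType} {d} (x y : 'cV[R[i]]_d) a b :
  (x *m adjmx y) a b = x a 0 * conjc (y b 0).
Proof. by rewrite mxE big_ord1 mxE. Qed.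

Lemma F3_lemma {R : realType} {p d} (P : 'I_d -> 'rV[R]_p -> R)
  (W : 'I_d -> 'rV[R]_p -> 'cV[R[i]]_d) m th :
  (forall k, differentiable (P k) th) ->
  (forall k (a : 'I_d),
      differentiable (fun x => complex.Re (W k x a 0)) th /\
      differentiable (fun x => complex.Im (W k x a 0)) th) ->
  dmx (rho P W) m th =
  \sum_(k < d) (rc (pder (P k) m th) *: (W k th *m adjmx (W k th))
      + rc (P k th) *: (dket (W k) m th *m adjmx (W k th) + W k th *m adjmx (dket (W k) m th))).
Proof.
move=> dP dW; apply/matrixP => a b; rewrite mxE summxE.
have c := @cdv_sum _ _ d _ _ _ _ (fun k => cdvM (cdv_rc (rdv_P (P k) m th (dP k)))
   (cdvM (cdv_W W k a m th (dW k a)) (cdvJ (cdv_W W k b m th (dW k b))))).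
have c' : cdv (fun x => rho P W x a b) th (evec R m)
  (\sum_(k < d) (rc (pder (P k) m th) * (W k th a 0 * conjc (W k th b 0)) +
     rc (P k th) * (dket (W k) m th a 0 * conjc (W k th b 0) +
                    W k th a 0 * conjc (dket (W k) m th b 0)))).
  apply: (cdv_ext _ _ _ _ _ _ c) => x.
  by rewrite /rho summxE; apply: eq_bigr => k _; rewrite mxE outerE.
rewrite (cdv_cpder _ _ _ _ c'); apply: eq_bigr => k _.
by rewrite !mxE !big_ord1 !mxE.
Qed.


Lemma I1 {R : realType} {p d} (P : 'I_d -> 'rV[R]_p -> R)
  (W : 'I_d -> 'rV[R]_p -> 'cV[R[i]]_d) th (lam : 'I_p -> 'M[R[i]]_d) :
  (forall k, 0 <= P k th) ->
  (forall i j, braket (W i th) (W j th) = (i == j)%:R) ->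
  (forall m i j, braket (dket (W i) m th) (W j th) = - braket (W i th) (dket (W j) m th)) ->
  (forall m, dmx (rho P W) m th =
     \sum_(k < d) (rc (pder (P k) m th) *: (W k th *m adjmx (W k th))
      + rc (P k th) *: (dket (W k) m th *m adjmx (W k th) + W k th *m adjmx (dket (W k) m th)))) ->
  (forall m, is_SLD P W (lam m) m th) ->
  CLmx P W th - Hmx P W lam th =
  \sum_(i < d) \sum_(j < d | (i < j)%N)
     (rc (16 * P i th * P j th / (P i th + P j th)) / 2) *:
       (R1 (fun k => conjc (braket (W i th) (dket (W j) k th)))
        + R1 (fun k => braket (W i th) (dket (W j) k th))).
Proof.
move=> p0 ON F2 F3 SLD.
set w := fun i => W i th.
have rhoE : rho P W th = rhoA (fun k => P k th) w by [].
have Ld : forall m i j, (rc (P i th) + rc (P j th)) * tp w (lam m) i j =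
   2 * ((i == j)%:R * rc (pder (P i) m th) + (rc (P j th) - rc (P i th)) * braket (w i) (dket (W j) m th)).
  move=> m i j; case: (SLD m) => _ S.
  rewrite rhoE in S.
  rewrite (sld_rel _ _ _ _ ON S) F3 tp_drho //.
apply/matrixP => k l.
rewrite !mxE summxE rhoE tr_form //.
have E : \sum_(i < d) \sum_(j < d | (i < j)%N)
              rc (P i th + P j th) * braket (dket (W i) k th) (W j th) *
              braket (W j th) (dket (W i) l th)
   = \sum_(i < d) \sum_(j < d | (i < j)%N)
              rc (P i th + P j th) * (- braket (w i) (dket (W j) k th)) *
              (- conjc (braket (w i) (dket (W j) l th))).
  apply: eq_bigr => i _; apply: eq_bigr => j _.
  by rewrite F2 (braketC _ (W j th)) F2 conjN.
rewrite E (core _ (fun i => P i th) (fun i => pder (P i) k th) (fun i => pder (P i) l th)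
   (tp w (lam k)) (tp w (lam l))
   (fun i j => braket (w i) (dket (W j) k th)) (fun i j => braket (w i) (dket (W j) l th))).
- apply: eq_bigr => i _; rewrite summxE; apply: eq_bigr => j _.
  by rewrite !mxE conjK; field.
- exact: p0.
- by apply: tp_adj; case: (SLD k).
- by apply: tp_adj; case: (SLD l).
- exact: Ld.
- exact: Ld.
Qed.

Lemma I2 {R : realType} {p d} (P : 'I_d -> 'rV[R]_p -> R)
  (W : 'I_d -> 'rV[R]_p -> 'cV[R[i]]_d) th :
  CUmx P W th - CLmx P W th =
  \sum_(i < d | 0 < P i th) (rc 4 * rc (P i th)) *: R1 (fun k => braket (W i th) (dket (W i) k th)).
Proof.
rewrite /CUmx addrC addKr; apply/matrixP => k l.
rewrite !mxE summxE mulr_sumr; apply: eq_bigr => i _.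
rewrite !mxE (braketC _ (dket _ _ _)); ring.
Qed.


Lemma cJ_eq0 {R : realType} (z : R[i]) : conjc z * z = 0 -> z = 0.
Proof.
move=> /eqP; rewrite mulf_eq0 => /orP[/eqP h|/eqP //].
by rewrite -(conjK z) h conj0.
Qed.

Lemma R1_0 {R : realType} {n} (z : 'I_n -> R[i]) : (forall k, z k = 0) -> R1 z = 0.
Proof. by move=> h; apply/matrixP => k l; rewrite !mxE !h mulr0. Qed.

Lemma R1_diag {R : realType} {n} (z : 'I_n -> R[i]) m : R1 z m m = conjc (z m) * z m.
Proof. by rewrite mxE. Qed.

Lemma c_ge0 {R : realType} (a b : R) : 0 <= a -> 0 <= b -> 0 <= 16 * a * b / (a + b).
Proof. by move=> a0 b0; rewrite divr_ge0 ?mulr_ge0 ?addr_ge0. Qed.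

Lemma half_rc_ge0 {R : realType} (a : R) : 0 <= a -> 0 <= rc a / 2 :> R[i].
Proof. by move=> a0; rewrite divr_ge0 ?rc_ge0 ?ler0n. Qed.

Theorem theorem3p3 (R : realType) (p d : nat) (Theta : set 'rV[R]_p)
  (P : 'I_d -> 'rV[R]_p -> R) (W : 'I_d -> 'rV[R]_p -> 'cV[complex R]_d) :
  open Theta ->
  (forall k th, Theta th -> 0 <= P k th) ->
  (forall th, Theta th -> \sum_(k < d) P k th = 1) ->
  (forall k th, Theta th -> differentiable (P k) th) ->
  (forall th, Theta th -> forall i j : 'I_d,
      braket (W i th) (W j th) = (i == j)%:R) ->
  (forall k (a : 'I_d) th, Theta th ->
      differentiable (fun x => complex.Re (W k x a 0)) th /\
      differentiable (fun x => complex.Im (W k x a 0)) th) ->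
  forall th, Theta th ->
  forall lam : 'I_p -> 'M[complex R]_d,
  (forall m, is_SLD P W (lam m) m th) ->
  [/\ psd_le (Hmx P W lam th) (CLmx P W th),
      psd_le (CLmx P W th) (CUmx P W th),
      Hmx P W lam th = CLmx P W th <->
        (forall (m : 'I_p) (j k : 'I_d), j != k -> 0 < P j th -> 0 < P k th ->
           braket (dket (W j) m th) (W k th) = 0)
    & CLmx P W th = CUmx P W th <->
        (forall (m : 'I_p) (i : 'I_d), 0 < P i th ->
           braket (dket (W i) m th) (W i th) = 0)].
Proof.
move=> oT p0 _ dP ON dW th Tth lam SLD.
have ONth := ON th Tth.
have dWth : forall k a, differentiable (fun x => complex.Re (W k x a 0)) th /\
      differentiable (fun x => complex.Im (W k x a 0)) th.
  by move=> k a; exact: dW.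
have F2 : forall m i j, braket (dket (W i) m th) (W j th) = - braket (W i th) (dket (W j) m th).
  by move=> m; apply: (F2_lemma Theta W m th oT Tth ON dWth).
have F3 := fun m => F3_lemma P W m th (fun k => dP k th Tth) dWth.
have p0th : forall k, 0 <= P k th by move=> k; exact: p0.
have e1 := I1 P W th lam p0th ONth F2 F3 SLD.
have e2 := I2 P W th.
split.
- move=> x; rewrite -/(qf x _) e1 qfS; apply: sumr_ge0 => i _.
  rewrite qfS; apply: sumr_ge0 => j _; rewrite qfZ qfD.
  by rewrite mulr_ge0 ?half_rc_ge0 ?c_ge0 ?addr_ge0 ?qfR1_ge0.
- move=> x; rewrite -/(qf x _) e2 qfS; apply: sumr_ge0 => i _.
  by rewrite qfZ mulr_ge0 ?qfR1_ge0 // -rcM rc_ge0 // mulr_ge0.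
- split => [h m j k jk pj pk|h].
    have E : \sum_(i < d) \sum_(j < d | (i < j)%N)
       (rc (16 * P i th * P j th / (P i th + P j th)) / 2) *:
       (R1 (fun k => conjc (braket (W i th) (dket (W j) k th)))
        + R1 (fun k => braket (W i th) (dket (W j) k th))) = 0 by rewrite -e1 h subrr.
    move/matrixP: E => /(_ m m); rewrite summxE [RHS]mxE => S.
    move: S; under eq_bigr do rewrite summxE; move=> S.
    have nnT : forall i j, 0 <= ((rc (16 * P i th * P j th / (P i th + P j th)) / 2) *:
       (R1 (fun k => conjc (braket (W i th) (dket (W j) k th)))
        + R1 (fun k => braket (W i th) (dket (W j) k th)))) m m.
      move=> i j'; rewrite !mxE mulr_ge0 ?half_rc_ge0 ?c_ge0 //.
      by rewrite addr_ge0 // cJ_ge0.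
    have key : forall i j : 'I_d, (i < j)%N -> 0 < P i th -> 0 < P j th ->
        braket (W i th) (dket (W j) m th) = 0.
      move=> i j' ij pi pj'.
      have S1 := psumr_eq0P (fun (i : 'I_d) (_ : true) => sumr_ge0 _ (fun (j : 'I_d) _ => nnT i j)) S.
      have := psumr_eq0P (fun (j : 'I_d) _ => nnT i j) (S1 i isT) ij.
      rewrite mxE => /eqP; rewrite mulf_eq0 => /orP[].
        rewrite mulf_eq0 invr_eq0 pnatr_eq0 orbF => /eqP /rc_inj /eqP.
        by rewrite gt_eqF // divr_gt0 ?addr_gt0 // !mulr_gt0.
      rewrite mxE !R1_diag paddr_eq0 ?cJ_ge0 // => /andP[_ /eqP].
      exact: cJ_eq0.
    case: (ltngtP j k) => [jk'|kj|e].
    - by rewrite F2 key // oppr0.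
    - by rewrite braketC (key k j) // conj0.
    - by move: jk; rewrite (val_inj e) eqxx.
  apply/eqP; rewrite eq_sym -subr_eq0 e1; apply/eqP.
  apply: big1 => i _; apply: big1 => j ij.
  have inej : i != j by apply/eqP => e; move: ij; rewrite e ltnn.
  case: (boolP ((0 < P i th) && (0 < P j th))) => [/andP[pi pj]|np].
    have z : forall k, braket (W i th) (dket (W j) k th) = 0.
      by move=> k; have := h k i j inej pi pj; rewrite F2 => /eqP; rewrite oppr_eq0 => /eqP.
    rewrite !R1_0 ?addr0 ?scaler0 // => k; first by rewrite z conj0.
  have -> : 16 * P i th * P j th = 0.
    move: np; rewrite negb_and -!leNgt => /orP[hi|hj].
      have -> : P i th = 0 by apply/le_anti; rewrite hi p0th.
      by rewrite mulr0 mul0r.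
    have -> : P j th = 0 by apply/le_anti; rewrite hj p0th.
    by rewrite mulr0.
  by rewrite mul0r rc0 mul0r scale0r.
- split => [h m i pi|h].
    have E : \sum_(i < d | 0 < P i th) (rc 4 * rc (P i th)) *:
         R1 (fun k => braket (W i th) (dket (W i) k th)) = 0 by rewrite -e2 h subrr.
    move/matrixP: E => /(_ m m); rewrite summxE [RHS]mxE => S.
    have nn : forall j, 0 < P j th -> 0 <= ((rc 4 * rc (P j th)) *:
         R1 (fun k => braket (W j th) (dket (W j) k th))) m m.
      move=> j pj; rewrite mxE R1_diag mulr_ge0 ?cJ_ge0 // -rcM rc_ge0 // mulr_ge0 //.
    have := psumr_eq0P nn S pi.
    rewrite mxE R1_diag => /eqP; rewrite mulf_eq0 => /orP[|/eqP /cJ_eq0 a0].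
      by rewrite -rcM => /eqP /rc_inj /eqP; rewrite mulf_eq0 (gt_eqF pi) orbF pnatr_eq0.
    by rewrite braketC a0 conj0.
  apply/esym/eqP; rewrite -subr_eq0 e2; apply/eqP; apply: big1 => i pi.
  by rewrite R1_0 ?scaler0 // => k; rewrite braketC h // conj0.
Qed.
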